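(* Let $I$ be an arbitrary index set. There exists a triple $(\mathcal X,\operatorname{tr},(X_i)_{i\in I})$, where $\mathcal X$ is a unital complex algebra, $\operatorname{tr}$ is a center-valued expectation on $\mathcal X$ and $X_i\in\mathcal X$, which possesses the universal property for $I$ (defined in the context). It is unique in the sense that any two such triples are related by a unique $I$-adapted isomorphism; it is denoted $(\mathbb{C}\{X_i:i\in I\},\operatorname{tr},(X_i)_{i\in I})$. The unital homomorphism $\mathbb{C}\langle X_i:i\in I\rangle\to\mathcal X$ sending $X_i\mapsto X_i$ is injective, and, viewing $\mathbb{C}\langle X_i:i\in I\rangle$ as a subalgebra, the set $$\{M_0\operatorname{tr}(M_1)\cdots\operatorname{tr}(M_n):\ n\in\mathbb N,\ M_0,\dots,M_n \text{ monomials of } \mathbb{C}\langle X_i:i\in I\rangle\}$$ (considered as a set of elements of $\mathcal X$, so coinciding elements are counted once) is a basis of $\mathcal X$.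
   Context: $\mathbb{C}\langle X_i:i\in I\rangle$ is the free unital algebra on non-commuting indeterminates $(X_i)_{i\in I}$; monomials include the empty monomial $1$. For a unital complex algebra $\mathcal A$ with center $Z_{\mathcal A}$, a center-valued expectation is a linear map $\tau:\mathcal A\to Z_{\mathcal A}$ such that $\tau(\tau(A)B)=\tau(A)\tau(B)$ for all $A,B\in\mathcal A$ and $\tau(1_{\mathcal A})=1_{\mathcal A}$. A triple $(\mathcal X,\operatorname{tr},(X_i)_{i\in I})$ ($\mathcal X$ a unital algebra, $\operatorname{tr}$ a center-valued expectation on it, $X_i\in\mathcal X$) has the universal property for $I$ if for every unital complex algebra $\mathcal A$ with a center-valued expectation $\tau$ and every family $(A_i)_{i\in I}$ of elements of $\mathcal A$ there is a unique unital algebra homomorphism $f:\mathcal X\to\mathcal A$ with $f(X_i)=A_i$ for all $i$ and $\tau(f(X))=f(\operatorname{tr}(X))$ for all $X\in\mathcal X$. Such an $f$ is called an $I$-adapted homomorphism; a bijective one is an $I$-adapted isomorphism. *)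

(* Defs.v *)
From HB Require Import structures.
From Stdlib Require Import Reals Lra Psatz ClassicalEpsilon FunctionalExtensionality.
From mathcomp Require Import all_boot all_order all_algebra.

Set Implicit Arguments.
Unset Strict Implicit.
Unset Printing Implicit Defensive.

Import GRing.Theory.

Record complex := Cmk { Re : R; Im : R }.

Definition classic_eqb (T : Type) (x y : T) : bool :=
  if excluded_middle_informative (x = y) then true else false.

Lemma classic_eqP (T : Type) : Equality.axiom (@classic_eqb T).
Proof.
move=> x y; rewrite /classic_eqb.
case: (excluded_middle_informative (x = y)) => h; [exact: ReflectT | exact: ReflectF].
Qed.

HB.instance Definition _ := hasDecEq.Build complex (@classic_eqP complex).

Definition classic_find (T : Type) (P : pred T) (n : nat) : option T :=
  match excluded_middle_informative (exists x, P x) with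
  | left h => Some (proj1_sig (constructive_indefinite_description _ h))
  | right _ => None
  end.

Lemma classic_find_correct (T : Type) (P : pred T) n x :
  classic_find P n = Some x -> P x.
Proof.
rewrite /classic_find; case: excluded_middle_informative => // h [<-].
exact: proj2_sig (constructive_indefinite_description _ h).
Qed.

Lemma classic_find_complete (T : Type) (P : pred T) :
  (exists x, P x) -> exists n, classic_find P n.
Proof.
move=> h; exists 0%N; rewrite /classic_find.
by case: excluded_middle_informative.
Qed.

Lemma classic_find_ext (T : Type) (P Q : pred T) :
  P =1 Q -> classic_find P =1 classic_find Q.
Proof.
move=> h; have -> : P = Q by apply: functional_extensionality.
by [].
Qed.

HB.instance Definition _ := hasChoice.Build complex
  (@classic_find_correct complex) (@classic_find_complete complex)
  (@classic_find_ext complex).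

Definition C0 : complex := Cmk R0 R0.
Definition C1 : complex := Cmk R1 R0.
Definition Cadd (z w : complex) : complex :=
  Cmk (Rplus (Re z) (Re w)) (Rplus (Im z) (Im w)).
Definition Copp (z : complex) : complex := Cmk (Ropp (Re z)) (Ropp (Im z)).
Definition Cmul (z w : complex) : complex :=
  Cmk (Rminus (Rmult (Re z) (Re w)) (Rmult (Im z) (Im w)))
      (Rplus (Rmult (Re z) (Im w)) (Rmult (Im z) (Re w))).
Definition Cnorm2 (z : complex) : R := Rplus (Rmult (Re z) (Re z)) (Rmult (Im z) (Im z)).
Definition Cinv (z : complex) : complex :=
  Cmk (Rdiv (Re z) (Cnorm2 z)) (Rdiv (Ropp (Im z)) (Cnorm2 z)).

Lemma Cadd_assoc : associative Cadd.
Proof. by move=> [a b] [c d] [e f]; rewrite /Cadd /=; f_equal; ring. Qed.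
Lemma Cadd_comm : commutative Cadd.
Proof. by move=> [a b] [c d]; rewrite /Cadd /=; f_equal; ring. Qed.
Lemma Cadd0 : left_id C0 Cadd.
Proof. by move=> [a b]; rewrite /Cadd /=; f_equal; ring. Qed.
Lemma CaddN : left_inverse C0 Copp Cadd.
Proof. by move=> [a b]; rewrite /Cadd /C0 /=; f_equal; ring. Qed.

HB.instance Definition _ := GRing.isZmodule.Build complex
  Cadd_assoc Cadd_comm Cadd0 CaddN.

Lemma Cmul_assoc : associative Cmul.
Proof. by move=> [a b] [c d] [e f]; rewrite /Cmul /=; f_equal; ring. Qed.
Lemma Cmul_comm : commutative Cmul.
Proof. by move=> [a b] [c d]; rewrite /Cmul /=; f_equal; ring. Qed.
Lemma Cmul1 : left_id C1 Cmul.
Proof. by move=> [a b]; rewrite /Cmul /=; f_equal; ring. Qed.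
Lemma Cmul_addl : left_distributive Cmul Cadd.
Proof. by move=> [a b] [c d] [e f]; rewrite /Cmul /Cadd /=; f_equal; ring. Qed.
Lemma C1_neq0 : C1 != C0.
Proof.
apply/eqP => -[h]; exact: R1_neq_R0 h.
Qed.

HB.instance Definition _ := GRing.Zmodule_isComNzRing.Build complex
  Cmul_assoc Cmul_comm Cmul1 Cmul_addl C1_neq0.

Lemma CmulV (z : complex) : z != 0%R -> (Cinv z * z)%R = 1%R.
Proof.
case: z => a b /eqP hz.
have hn : Cnorm2 (Cmk a b) <> R0.
  rewrite /Cnorm2 /= => h; apply: hz.
  have ha : a = R0 by nra.
  have hb : b = R0 by nra.
  by rewrite ha hb.
change (Cmul (Cinv (Cmk a b)) (Cmk a b) = C1).
move: hn; rewrite /Cmul /Cinv /C1 /Cnorm2 /= => hn.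
f_equal; field; exact: hn.
Qed.

Lemma Cinv0 : Cinv 0%R = 0%R.
Proof.
rewrite /Cinv /Cnorm2 /=.
have -> : Rplus (Rmult R0 R0) (Rmult R0 R0) = R0 by ring.
by rewrite /Rdiv Rinv_0 !Rmult_0_r.
Qed.

HB.instance Definition _ := GRing.ComNzRing_isField.Build complex CmulV Cinv0.

Local Open Scope ring_scope.

Definition unital_alg_hom (A B : algType complex) (f : A -> B) : Prop :=
  linear f /\ monoid_morphism f.

Definition center_valued_expectation (A : algType complex) (tau : A -> A) : Prop :=
  [/\ linear tau,
      (forall a b : A, tau a * b = b * tau a),
      (forall a b : A, tau (tau a * b) = tau a * tau b)
    & tau 1 = 1].

Definition adapted_hom (I : Type) (X : algType complex) (tr : X -> X) (x : I -> X)
    (A : algType complex) (tau : A -> A) (a : I -> A) (f : X -> A) : Prop :=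
  [/\ unital_alg_hom f, (forall i, f (x i) = a i)
    & (forall y : X, tau (f y) = f (tr y))].

Definition universal_property (I : Type) (X : algType complex) (tr : X -> X)
    (x : I -> X) : Prop :=
  forall (A : algType complex) (tau : A -> A),
    center_valued_expectation tau ->
    forall a : I -> A, exists! f : X -> A, adapted_hom tr x tau a f.

(* (F, y) is a free unital complex algebra on the generators (y_i)_{i in I},
   i.e. a model of C<X_i : i in I> *)
Definition free_unital_algebra (I : Type) (F : algType complex) (y : I -> F) : Prop :=
  forall (A : algType complex) (a : I -> A),
    exists! g : F -> A, unital_alg_hom g /\ (forall i, g (y i) = a i).

Definition monomial (I : Type) (X : algType complex) (x : I -> X) (w : seq I) : X :=
  \prod_(i <- w) x i.

Definition lin_indep (V : lmodType complex) (S : V -> Prop) : Prop :=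
  forall (s : seq V) (c : V -> complex),
    uniq s -> (forall v, v \in s -> S v) ->
    \sum_(v <- s) c v *: v = 0 -> forall v, v \in s -> c v = 0.

Definition spans (V : lmodType complex) (S : V -> Prop) : Prop :=
  forall z : V, exists s : seq (complex * V),
    (forall p, p \in s -> S p.2) /\ z = \sum_(p <- s) p.1 *: p.2.

Definition is_basis (V : lmodType complex) (S : V -> Prop) : Prop :=
  lin_indep S /\ spans S.

Definition trace_monomials (I : Type) (X : algType complex) (tr : X -> X)
    (x : I -> X) : X -> Prop :=
  fun z => exists (M0 : seq I) (Ms : seq (seq I)),
    z = monomial x M0 * \prod_(M <- Ms) tr (monomial x M).

(* Main.v *)
Require Import Defs.
From HB Require Import structures.
From Stdlib Require Import ClassicalEpsilon FunctionalExtensionality ProofIrrelevance.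
From mathcomp Require Import all_boot all_order all_algebra.
From mathcomp Require Import finmap.
From mathcomp Require Import monalg.
Set Implicit Arguments.
Unset Strict Implicit.
Unset Printing Implicit Defensive.
Import GRing.Theory.
Local Open Scope ring_scope.

Definition J (I : Type) : Type := I.
HB.instance Definition _ (I : Type) := hasDecEq.Build (J I) (@classic_eqP I).
HB.instance Definition _ (I : Type) := hasChoice.Build (J I)
  (@classic_find_correct I) (@classic_find_complete I) (@classic_find_ext I).

Definition V (I : Type) : choiceType := (J I * seq (J I))%type.
Definition KT (I : Type) : Type := (fmonom (J I) * cmonom (V I))%type.
HB.instance Definition _ (I : Type) := Choice.on (KT I).

Section KTmon.
Variable I : Type.
Definition kone : KT I := (mone, mone).
Definition kmul (a b : KT I) : KT I := (mmul a.1 b.1, mmul a.2 b.2).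
Lemma kmulA : associative kmul.
Proof. by move=> [a b] [c d] [e f]; rewrite /kmul /= !mulmA. Qed.
Lemma kmul1m : left_id kone kmul.
Proof. by move=> [a b]; rewrite /kmul /= !mul1m. Qed.
Lemma kmulm1 : right_id kone kmul.
Proof. by move=> [a b]; rewrite /kmul /= !mulm1. Qed.
Lemma kunit : forall x y, kmul x y = kone -> x = kone /\ y = kone.
Proof.
move=> [a b] [c d] [] /unitm [-> ->] /unitm [-> ->]; by [].
Qed.
End KTmon.
HB.instance Definition _ (I : Type) := Choice_isMonomialDef.Build (KT I)
  (@kmulA I) (@kmul1m I) (@kmulm1 I) (@kunit I).

Section Alg.
Variable I : Type.
Local Notation X0 := {malg complex[KT I]}.
Lemma X0scalerAr (c : complex) (x y : X0) : c *: (x * y) = x * (c *: y).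
Proof.
have comm : c%:MP * x = x * c%:MP.
  rewrite !malgM_def fgmulUg fgmulgU; apply: eq_bigr => k _.
  rewrite [c * _]mulrC. rewrite mul1m. by rewrite mulm1.
rewrite -mul_malgC. rewrite -mul_malgC. rewrite mulrA comm. rewrite mulrA. reflexivity.
Qed.
End Alg.
Definition X0 (I : Type) := malg (KT I) complex.
HB.instance Definition _ (I : Type) := GRing.Lalgebra.on (X0 I).
HB.instance Definition _ (I : Type) := GRing.Lalgebra_isAlgebra.Build complex
  (X0 I) (@X0scalerAr I).

Section LinFacts.
Variables (U W : lmodType complex) (f : U -> W) (hf : linear f).
Lemma linD u v : f (u + v) = f u + f v.
Proof. by have := hf 1 u v; rewrite !scale1r. Qed.
Lemma lin0 : f 0 = 0.
Proof. by apply: (addrI (f 0)); rewrite addr0 -linD addr0. Qed.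
Lemma linZ a u : f (a *: u) = a *: f u.
Proof. by have := hf a u 0; rewrite !addr0 lin0 addr0. Qed.
Lemma lin_sum (T : Type) (r : seq T) (P : pred T) (F : T -> U) :
  f (\sum_(i <- r | P i) F i) = \sum_(i <- r | P i) f (F i).
Proof. exact: (big_morph f linD lin0). Qed.
End LinFacts.

Lemma mk_linear (U W : lmodType complex) (f : U -> W) :
  (forall u v, f (u + v) = f u + f v) -> (forall a u, f (a *: u) = a *: f u) ->
  linear f.
Proof. by move=> hD hZ a u v; rewrite hD hZ. Qed.


Section Ev.
Variable I : Type.
Implicit Types (g : X0 I) (k : KT I).

Definition ev (A : lmodType complex) (H : KT I -> A) (g : X0 I) : A :=
  \sum_(k <- msupp g) g@_k *: H k.

Lemma evEw (A : lmodType complex) (H : KT I -> A) (d : {fset KT I}) g :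
  (msupp g `<=` d)%fset -> ev H g = \sum_(k <- d) g@_k *: H k.
Proof.
move=> le; rewrite /ev [LHS](big_fset_incl _ le) => //= x xd /mcoeff_outdom ->.
by rewrite scale0r.
Qed.

Lemma evD (A : lmodType complex) (H : KT I -> A) g1 g2 :
  ev H (g1 + g2) = ev H g1 + ev H g2.
Proof.
have s1 : (msupp g1 `<=` msupp g1 `|` msupp g2)%fset by exact: fsubsetUl.
have s2 : (msupp g2 `<=` msupp g1 `|` msupp g2)%fset by exact: fsubsetUr.
rewrite (evEw _ (monalg.msuppD_le g1 g2)) (evEw _ s1) (evEw _ s2) -big_split /=.
by apply: eq_bigr => k _; rewrite mcoeffD scalerDl.
Qed.

Lemma evZ (A : lmodType complex) (H : KT I -> A) c g :
  ev H (c *: g) = c *: ev H g.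
Proof.
rewrite (evEw _ (monalg.msuppZ_le c g)) /ev scaler_sumr.
by apply: eq_bigr => k _; rewrite mcoeffZ scalerA.
Qed.

Lemma ev_lin (A : lmodType complex) (H : KT I -> A) : linear (ev H).
Proof. apply: mk_linear; [exact: evD | exact: evZ]. Qed.

Lemma evU (A : lmodType complex) (H : KT I -> A) c k :
  ev H << c *g k >> = c *: H k.
Proof. by rewrite (evEw _ msuppU_le) big_seq_fset1 mcoeffUU. Qed.

Fact bs_key : unit. Proof. exact: tt. Qed.
Definition bs : KT I -> X0 I := locked_with bs_key (fun k : KT I => (<< k >> : X0 I)).
Lemma bsE k : bs k = << k >>.
Proof. by rewrite /bs unlock. Qed.

Lemma evB (A : lmodType complex) (H : KT I -> A) k : ev H (bs k) = H k.
Proof. by rewrite bsE evU scale1r. Qed.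

Lemma malg_decomp g : g = \sum_(k <- msupp g) g@_k *: bs k.
Proof.
rewrite {1}(monalgE g); apply: eq_bigr => k _.
rewrite bsE -mul_malgC malgM_def fgmulUU mulr1 mul1m; reflexivity.
Qed.

Lemma basis_mul k1 k2 :
  bs k1 * bs k2 = bs (mmul k1 k2).
Proof. by rewrite !bsE malgM_def fgmulUU mulr1. Qed.

Lemma ev_mul (A : algType complex) (H : KT I -> A) g1 g2 :
  (forall k1 k2, H (mmul k1 k2) = H k1 * H k2) ->
  ev H (g1 * g2) = ev H g1 * ev H g2.
Proof.
move=> HM; rewrite {1}(malg_decomp g1) {1}(malg_decomp g2) mulr_suml.
rewrite (lin_sum (ev_lin H)) mulr_suml.
apply: eq_bigr => k1 _; rewrite mulr_sumr (lin_sum (ev_lin H)) mulr_sumr.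
apply: eq_bigr => k2 _.
rewrite -scalerAl -scalerAr scalerA basis_mul (linZ (ev_lin H)) evB HM.
by rewrite -scalerAl -scalerAr scalerA.
Qed.

Lemma ev1 (A : algType complex) (H : KT I -> A) :
  H mone = 1 -> ev H 1 = 1.
Proof.
move=> H1; have -> : (1 : X0 I) = bs mone by rewrite bsE; reflexivity.
by rewrite evB H1.
Qed.

Lemma ev_hom (A : algType complex) (H : KT I -> A) :
  H mone = 1 -> (forall k1 k2, H (mmul k1 k2) = H k1 * H k2) ->
  unital_alg_hom (ev H).
Proof.
move=> H1 HM; split; first exact: ev_lin.
by split; [exact: ev1 | move=> g1 g2; exact: ev_mul].
Qed.

Lemma lin_ext (A : lmodType complex) (f1 f2 : X0 I -> A) :
  linear f1 -> linear f2 -> (forall k, f1 (bs k) = f2 (bs k)) ->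
  f1 =1 f2.
Proof.
move=> h1 h2 e g; rewrite (malg_decomp g) (lin_sum h1) (lin_sum h2).
by apply: eq_bigr => k _; rewrite (linZ h1) (linZ h2) e.
Qed.
End Ev.

Section LinMore.
Lemma lin_comp (U W Y : lmodType complex) (f : W -> Y) (g : U -> W) :
  linear f -> linear g -> linear (fun u => f (g u)).
Proof. by move=> hf hg a u v; rewrite hg hf. Qed.
Lemma lin_mull (A : algType complex) (c : A) : linear (fun b : A => c * b).
Proof. by move=> a u v; rewrite mulrDr scalerAr. Qed.
Lemma lin_mulr (A : algType complex) (c : A) : linear (fun b : A => b * c).
Proof. by move=> a u v; rewrite mulrDl scalerAl. Qed.
End LinMore.


Section Trace.
Variable I : Type.
Definition tv (s : seq (J I)) : cmonom (V I) :=
  if s is i :: s' then ucm ((i, s') : V I) else mone.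
Definition kx (i : I) : X0 I := bs ((FMonom [:: (i : J I)], mone) : KT I).
Definition trH (k : KT I) : X0 I := bs ((mone, mmul k.2 (tv k.1)) : KT I).
Definition tr0 : X0 I -> X0 I := ev trH.

Lemma KTmulE (a b : KT I) : mmul a b = (mmul a.1 b.1, mmul a.2 b.2).
Proof. reflexivity. Qed.
Lemma KToneE : (mone : KT I) = (mone, mone).
Proof. reflexivity. Qed.
Lemma X0oneE : (1 : X0 I) = bs mone.
Proof. rewrite bsE; reflexivity. Qed.

Lemma tr0_basis k : tr0 (bs k) = trH k.
Proof. exact: evB. Qed.

Lemma central_basis m (b : X0 I) :
  bs ((mone, m) : KT I) * b = b * bs ((mone, m) : KT I).
Proof.
rewrite (malg_decomp b) mulr_sumr mulr_suml; apply: eq_bigr => k _.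
rewrite -scalerAr -scalerAl !basis_mul !KTmulE /= mul1m mulm1 [mmul m _]mulmC.
reflexivity.
Qed.

Lemma tr0_central (a b : X0 I) : tr0 a * b = b * tr0 a.
Proof.
rewrite /tr0 /ev mulr_suml mulr_sumr; apply: eq_bigr => k _.
rewrite -scalerAl -scalerAr /trH central_basis; reflexivity.
Qed.

Lemma tr0_lin : linear tr0.
Proof. exact: ev_lin. Qed.

Lemma tr0_mul_bb k l : tr0 (tr0 (bs k) * bs l) = tr0 (bs k) * tr0 (bs l).
Proof.
rewrite !tr0_basis /trH basis_mul tr0_basis /trH basis_mul !KTmulE /=.
rewrite !mul1m -mulmA; reflexivity.
Qed.

Lemma tr0_mul (a b : X0 I) : tr0 (tr0 a * b) = tr0 a * tr0 b.
Proof.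
move: b; apply: (lin_ext (lin_comp tr0_lin (lin_mull (tr0 a)))
   (lin_comp (lin_mull (tr0 a)) tr0_lin)) => l.
move: a; apply: (lin_ext (lin_comp tr0_lin (lin_comp (lin_mulr _) tr0_lin))
   (lin_comp (lin_mulr _) tr0_lin)) => k.
exact: tr0_mul_bb.
Qed.

Lemma tr0_one : tr0 1 = 1.
Proof.
rewrite X0oneE tr0_basis /trH KToneE /= fm1 /= mul1m; reflexivity.
Qed.

Lemma tr0_cve : center_valued_expectation tr0.
Proof.
split; [exact: tr0_lin | exact: tr0_central | exact: tr0_mul | exact: tr0_one].
Qed.
End Trace.

Section Univ.
Variables (I : Type) (A : algType complex) (tau : A -> A).
Hypothesis htau : center_valued_expectation tau.
Variable a : I -> A.

Lemma tau_lin : linear tau. Proof. by case: htau. Qed.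
Lemma tau_central x y : tau x * y = y * tau x. Proof. by case: htau. Qed.
Lemma tau_mul x y : tau (tau x * y) = tau x * tau y. Proof. by case: htau. Qed.
Lemma tau1 : tau 1 = 1. Proof. by case: htau. Qed.

Definition goodZ (x : A) :=
  (forall y, x * y = y * x) /\ (forall b, tau (b * x) = tau b * x).
Definition Zc := {x : A | goodZ x}.

Lemma goodZ1 : goodZ 1.
Proof. by split=> [y|b]; rewrite ?mulr1 ?mul1r. Qed.
Lemma goodZM x y : goodZ x -> goodZ y -> goodZ (x * y).
Proof.
move=> [cx tx] [cy ty]; split=> [z|b].
  by rewrite -mulrA cy mulrA cx mulrA.
by rewrite mulrA ty tx mulrA.
Qed.
Lemma goodZtau c : goodZ (tau c).
Proof.
split=> [y|b]; first exact: tau_central.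
by rewrite -tau_central tau_mul tau_central.
Qed.

Definition oneZ : Zc := exist _ 1 goodZ1.
Definition mulZ (x y : Zc) : Zc :=
  exist _ (proj1_sig x * proj1_sig y) (goodZM (proj2_sig x) (proj2_sig y)).

Lemma zc_inj (x y : Zc) : proj1_sig x = proj1_sig y -> x = y.
Proof.
case: x y => [x px] [y py] /= e; subst y; congr exist; exact: proof_irrelevance.
Qed.

Lemma mulZA : associative mulZ.
Proof. by move=> x y z; apply: zc_inj; rewrite /= mulrA. Qed.
Lemma mulZC : commutative mulZ.
Proof. by move=> x y; apply: zc_inj => /=; rewrite (proj1 (proj2_sig x)). Qed.
Lemma mul1Z : left_id oneZ mulZ.
Proof. by move=> x; apply: zc_inj; rewrite /= mul1r. Qed.
Lemma mulZ1 : right_id oneZ mulZ.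
Proof. by move=> x; apply: zc_inj; rewrite /= mulr1. Qed.
End Univ.


HB.instance Definition _ (A : algType complex) (tau : A -> A) :=
  Monoid.isComLaw.Build (Zc tau) (oneZ tau) (@mulZ A tau) (@mulZA A tau)
    (@mulZC A tau) (@mul1Z A tau).

Section Univ2.
Variables (I : Type) (A : algType complex) (tau : A -> A).
Hypothesis htau : center_valued_expectation tau.
Variable a : I -> A.
Local Notation Zc := (Zc tau).
Local Notation oneZ := (oneZ tau).
Local Notation mulZ := (@mulZ A tau).

Fixpoint expZ (x : Zc) (n : nat) : Zc :=
  if n is n'.+1 then mulZ x (expZ x n') else oneZ.

Lemma expZD x m n : expZ x (m + n) = mulZ (expZ x m) (expZ x n).
Proof.
elim: m => [|m IH] /=; first by rewrite mul1Z.
by rewrite IH mulZA.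
Qed.
Lemma expZ1 x : expZ x 1 = x.
Proof. by rewrite /= mulZ1. Qed.
Lemma val_expZ x n : proj1_sig (expZ x n) = proj1_sig x ^+ n.
Proof. by elim: n => [|n IH] //=; rewrite IH exprS. Qed.
Lemma val_bigZ (T : Type) (r : seq T) (F : T -> Zc) :
  proj1_sig (\big[mulZ/oneZ]_(i <- r) F i) = \prod_(i <- r) proj1_sig (F i).
Proof.
elim: r => [|x r IH]; first by rewrite !big_nil.
by rewrite !big_cons /= IH.
Qed.

Definition tZ (s : seq I) : Zc := exist _ (tau (monomial a s)) (goodZtau htau _).

Definition F2Z (m : cmonom (V I)) : Zc :=
  \big[mulZ/oneZ]_(v <- finsupp m) expZ (tZ (v.1 :: v.2)) (m v).

Lemma F2Zw (d : {fset V I}) (m : cmonom (V I)) : (finsupp m `<=` d)%fset ->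
  F2Z m = \big[mulZ/oneZ]_(v <- d) expZ (tZ (v.1 :: v.2)) (m v).
Proof.
move=> le; rewrite /F2Z (big_fset_incl _ le) // => v vd vn.
have -> : m v = 0%N by apply/eqP; rewrite cmE_eq0.
by [].
Qed.

Lemma F2Z_mul (m1 m2 : cmonom (V I)) : F2Z (mmul m1 m2) = mulZ (F2Z m1) (F2Z m2).
Proof.
have s1 : (finsupp m1 `<=` finsupp m1 `|` finsupp m2)%fset by exact: fsubsetUl.
have s2 : (finsupp m2 `<=` finsupp m1 `|` finsupp m2)%fset by exact: fsubsetUr.
rewrite (F2Zw s1) (F2Zw s2) /F2Z mdomD -big_split /=.
by apply: eq_bigr => v _; rewrite cmM expZD.
Qed.

Lemma F2Z_one : F2Z mone = oneZ.
Proof. by rewrite /F2Z mdom1 big_seq_fset0. Qed.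

Lemma F2Z_u (v : V I) : F2Z (ucm v) = tZ (v.1 :: v.2).
Proof. by rewrite /F2Z mdomU big_seq_fset1 cmUU expZ1. Qed.

Definition FA (k : KT I) : A := monomial a k.1 * proj1_sig (F2Z k.2).

Lemma FA_one : FA mone = 1.
Proof. by rewrite /FA KToneE /= fm1 /monomial big_nil F2Z_one mulr1. Qed.

Lemma FA_mul k1 k2 : FA (mmul k1 k2) = FA k1 * FA k2.
Proof.
rewrite /FA KTmulE /= fmM /monomial big_cat F2Z_mul /=.
set z1 := proj1_sig (F2Z k1.2); set z2 := proj1_sig (F2Z k2.2).
have c1 : forall y, z1 * y = y * z1 := proj1 (proj2_sig (F2Z k1.2)).
by rewrite !mulrA -[_ * _ * z1]mulrA -c1 !mulrA.
Qed.
End Univ2.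

Section Univ3.
Variables (I : Type) (A : algType complex) (tau : A -> A).
Hypothesis htau : center_valued_expectation tau.
Variable a : I -> A.

Definition fA : X0 I -> A := ev (FA htau a).

Lemma fA_hom : unital_alg_hom fA.
Proof. exact: ev_hom (FA_one htau a) (FA_mul htau a). Qed.

Lemma fA_x i : fA (kx i) = a i.
Proof.
rewrite /fA /kx evB /FA /= F2Z_one /monomial big_cons big_nil /=.
by rewrite !mulr1.
Qed.

Lemma F2Z_tv (s : seq (J I)) : proj1_sig (F2Z htau a (tv s)) = tau (monomial a s).
Proof.
case: s => [|i s] /=; first by rewrite F2Z_one /monomial big_nil tau1.
by rewrite F2Z_u.
Qed.

Lemma fA_tr y : tau (fA y) = fA (tr0 y).
Proof.
move: y; apply: (lin_ext (lin_comp (tau_lin htau) (ev_lin _))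
   (lin_comp (ev_lin _) (@tr0_lin I))) => k.
rewrite /fA tr0_basis /trH !evB /FA /= fm1 /monomial big_nil mul1r.
rewrite F2Z_mul /= F2Z_tv.
rewrite (proj2 (proj2_sig (F2Z htau a k.2))).
by rewrite (proj1 (proj2_sig (F2Z htau a k.2))).
Qed.

Lemma fA_adapted : adapted_hom (@tr0 I) (@kx I) tau a fA.
Proof. split; [exact: fA_hom | exact: fA_x | exact: fA_tr]. Qed.
End Univ3.

Section Gen.
Variable I : Type.

Lemma bs_split (s : fmonom (J I)) (m : cmonom (V I)) :
  bs ((s, m) : KT I) = bs ((s, mone) : KT I) * bs ((mone, m) : KT I).
Proof. rewrite basis_mul KTmulE /= mulm1 mul1m; reflexivity. Qed.

Lemma mon_bs (s : seq (J I)) :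
  monomial (@kx I) s = bs ((FMonom s, mone) : KT I).
Proof.
elim: s => [|i s IH].
  rewrite /monomial big_nil X0oneE KToneE -fmoneE; reflexivity.
rewrite /monomial big_cons -/(monomial _ _) IH /kx basis_mul KTmulE /= mul1m.
have -> : mmul (FMonom [:: i]) (FMonom s) = FMonom (i :: s) := fmmulE _ _.
reflexivity.
Qed.

Lemma gen_ind (Pr : X0 I -> Prop) :
  Pr 1 -> (forall i, Pr (kx i)) -> (forall x y, Pr x -> Pr y -> Pr (x * y)) ->
  (forall x, Pr x -> Pr (tr0 x)) -> forall k, Pr (bs k).
Proof.
move=> P1 Px PM Ptr.
have hm : forall s, Pr (monomial (@kx I) s).
  elim=> [|i s IH]; first by rewrite /monomial big_nil.
  by rewrite /monomial big_cons; apply: PM.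
have hs : forall s : seq (J I), Pr (bs ((FMonom s, mone) : KT I)).
  by move=> s; rewrite -mon_bs.
have hu : forall v : V I, Pr (bs ((mone, ucm v) : KT I)).
  move=> v; have -> : bs ((mone, ucm v) : KT I) = tr0 (bs ((FMonom (v.1 :: v.2), mone) : KT I)).
    rewrite tr0_basis /trH /= mul1m; case: v => ? ?; reflexivity.
  exact/Ptr/hs.
have hc : forall m : cmonom (V I), Pr (bs ((mone, m) : KT I)).
  move=> m; elim: {m}(mdeg m).+1 {-2}m (ltnSn (mdeg m)) => // n IH m lt.
  case: (boolP (m == mone)) => [/eqP -> | nm].
    by rewrite -KToneE -X0oneE.
  have : finsupp m != fset0.
    apply: contra nm => /eqP e; apply/cmP => i.
    have : i \notin finsupp m by rewrite e.
    by rewrite -cmE_eq0 cm1 => /eqP.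
  case/fset0Pn => v vin.
  have mv : (0 < m v)%N by rewrite lt0n cmE_eq0 negbK.
  have em : m = mmul (ucm v) (divcm m (ucm v)).
    apply/eqP/cmP => i; rewrite cmM divcmE cmU.
    by case: eqP => [<-|_]; rewrite ?subn0 // addnC subnK.
  have -> : bs ((mone, m) : KT I) =
     bs ((mone, ucm v) : KT I) * bs ((mone, divcm m (ucm v)) : KT I).
    rewrite basis_mul KTmulE /= mul1m -em; reflexivity.
  apply: PM; first exact: hu.
  apply: IH; move: lt; rewrite {1}em mdegM mdegU.
  by rewrite add1n ltnS.
case=> s m; rewrite bs_split; apply: PM; last exact: hc.
by rewrite -(fmK s) -/(fmonom_val s); apply: hs.
Qed.
End Gen.

Section HomFacts.
Variables (X A : algType complex) (f : X -> A).
Hypothesis hf : unital_alg_hom f.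
Lemma uah_lin : linear f. Proof. by case: hf. Qed.
Lemma uah1 : f 1 = 1. Proof. by case: hf => _ []. Qed.
Lemma uahM x y : f (x * y) = f x * f y. Proof. by case: hf => _ [] _ ->. Qed.
Lemma uah_prod (T : Type) (r : seq T) (F : T -> X) :
  f (\prod_(i <- r) F i) = \prod_(i <- r) f (F i).
Proof. exact: (big_morph f uahM uah1). Qed.
Lemma uah_mon (I : Type) (x : I -> X) (b : I -> A) (s : seq I) :
  (forall i, f (x i) = b i) -> f (monomial x s) = monomial b s.
Proof. by move=> e; rewrite /monomial uah_prod; apply: eq_bigr => i _; rewrite e. Qed.
End HomFacts.

Lemma uah_id (X : algType complex) : unital_alg_hom (fun x : X => x).
Proof. by split=> //; split. Qed.

Lemma uah_comp (X Y Z : algType complex) (f : X -> Y) (g : Y -> Z) :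
  unital_alg_hom f -> unital_alg_hom g -> unital_alg_hom (fun x => g (f x)).
Proof.
move=> hf hg; split; first exact: lin_comp (uah_lin hg) (uah_lin hf).
by split; [rewrite (uah1 hf) (uah1 hg) | move=> x y; rewrite (uahM hf) (uahM hg)].
Qed.

Lemma adapted_id (I : Type) (X : algType complex) (tr : X -> X) (x : I -> X) :
  adapted_hom tr x tr x (fun y => y).
Proof. by split; [exact: uah_id | |]. Qed.

Lemma adapted_comp (I : Type) (X Y Z : algType complex) (trX : X -> X) (trY : Y -> Y)
  (trZ : Z -> Z) (x : I -> X) (y : I -> Y) (z : I -> Z) (f : X -> Y) (g : Y -> Z) :
  adapted_hom trX x trY y f -> adapted_hom trY y trZ z g ->
  adapted_hom trX x trZ z (fun u => g (f u)).
Proof.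
move=> [hf fx ftr] [hg gx gtr]; split; first exact: uah_comp.
  by move=> i; rewrite fx gx.
by move=> u; rewrite gtr ftr.
Qed.

Section X0Univ.
Variable I : Type.

Lemma X0_adapted_unique (A : algType complex) (tau : A -> A)
    (htau : center_valued_expectation tau) (a : I -> A) (h : X0 I -> A) :
  adapted_hom (@tr0 I) (@kx I) tau a h -> h = fA htau a.
Proof.
move=> [hh hx htr]; apply: functional_extensionality.
apply: (lin_ext (uah_lin hh) (ev_lin _)).
apply: (@gen_ind I (fun y => h y = fA htau a y)).
- by rewrite (uah1 hh) (uah1 (fA_hom htau a)).
- by move=> i; rewrite hx fA_x.
- by move=> x y ex ey; rewrite (uahM hh) (uahM (fA_hom htau a)) ex ey.
- by move=> x ex; rewrite -htr -fA_tr ex.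
Qed.

Lemma X0_universal : universal_property (@tr0 I) (@kx I).
Proof.
move=> A tau htau a; exists (fA htau a); split; first exact: fA_adapted.
by move=> h hh; rewrite (X0_adapted_unique htau hh).
Qed.
End X0Univ.

Lemma triple_unique (I : Type)
  (X1 : algType complex) (tr1 : X1 -> X1) (x1 : I -> X1)
  (X2 : algType complex) (tr2 : X2 -> X2) (x2 : I -> X2) :
  center_valued_expectation tr1 -> universal_property tr1 x1 ->
  center_valued_expectation tr2 -> universal_property tr2 x2 ->
  exists! f : X1 -> X2, adapted_hom tr1 x1 tr2 x2 f /\ bijective f.
Proof.
move=> h1 U1 h2 U2.
have [f12 [a12 u12]] := U1 X2 tr2 h2 x2.
have [f21 [a21 u21]] := U2 X1 tr1 h1 x1.
have [g1 [ag1 ug1]] := U1 X1 tr1 h1 x1.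
have [g2 [ag2 ug2]] := U2 X2 tr2 h2 x2.
have e1 : (fun u => f21 (f12 u)) = (fun u => u).
  by rewrite -(ug1 _ (adapted_comp a12 a21)) -(ug1 _ (adapted_id tr1 x1)).
have e2 : (fun u => f12 (f21 u)) = (fun u => u).
  by rewrite -(ug2 _ (adapted_comp a21 a12)) -(ug2 _ (adapted_id tr2 x2)).
exists f12; split.
  split=> //; exists f21 => u; [exact: (congr1 (fun F => F u) e1) |
                                exact: (congr1 (fun F => F u) e2)].
by move=> f [af _]; exact: u12.
Qed.

Section TMfacts.
Variables (I : Type) (X : algType complex) (tr : X -> X) (x : I -> X).
Hypothesis htr : center_valued_expectation tr.
Local Notation TM := (trace_monomials tr x).

Lemma trP_central (Ms : seq (seq I)) (y : X) :
  GRing.comm y (\prod_(M <- Ms) tr (monomial x M)).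
Proof.
apply: commr_prod => M _; rewrite /GRing.comm; by rewrite (tau_central htr).
Qed.

Lemma tr_prod (Ms : seq (seq I)) (b : X) :
  tr (b * \prod_(M <- Ms) tr (monomial x M)) = tr b * \prod_(M <- Ms) tr (monomial x M).
Proof.
elim: Ms b => [|M Ms IH] b; first by rewrite big_nil !mulr1.
rewrite big_cons mulrA IH mulrA; congr (_ * _).
by rewrite -(tau_central htr) (tau_mul htr) (tau_central htr).
Qed.

Lemma TM1 : TM 1.
Proof. by exists [::], [::]; rewrite /monomial !big_nil mulr1. Qed.
Lemma TMx i : TM (x i).
Proof. by exists [:: i], [::]; rewrite /monomial big_cons !big_nil !mulr1. Qed.
Lemma TMM u v : TM u -> TM v -> TM (u * v).
Proof.
move=> [M0 [Ms ->]] [N0 [Ns ->]]; exists (M0 ++ N0), (Ms ++ Ns).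
have hm : monomial x (M0 ++ N0) = monomial x M0 * monomial x N0.
  by rewrite /monomial big_cat.
rewrite hm big_cat /= !mulrA -[_ * _ * monomial x N0]mulrA -(trP_central Ms).
by rewrite !mulrA.
Qed.
Lemma TMtr u : TM u -> TM (tr u).
Proof.
move=> [M0 [Ms ->]]; exists [::], (M0 :: Ms).
by rewrite tr_prod /monomial big_nil mul1r big_cons.
Qed.
End TMfacts.

Lemma TM_map (I : Type) (X Y : algType complex) (trX : X -> X) (x : I -> X)
  (trY : Y -> Y) (y : I -> Y) (f : X -> Y) (z : X) :
  adapted_hom trX x trY y f -> trace_monomials trX x z -> trace_monomials trY y (f z).
Proof.
move=> [hf fx ftr] [M0 [Ms ->]]; exists M0, Ms.
rewrite (uahM hf) (uah_mon hf _ fx) (uah_prod hf); congr (_ * _).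
by apply: eq_bigr => M _; rewrite -ftr (uah_mon hf _ fx).
Qed.

Section X0TM.
Variable I : Type.

Lemma X0_bs_TM k : trace_monomials (@tr0 I) (@kx I) (bs k).
Proof.
apply: (@gen_ind I (trace_monomials (@tr0 I) (@kx I))).
- exact: TM1.
- exact: TMx.
- exact: TMM (@tr0_cve I).
- exact: TMtr (@tr0_cve I).
Qed.

Lemma X0_TM_bs z : trace_monomials (@tr0 I) (@kx I) z -> exists k, z = bs k.
Proof.
move=> [M0 [Ms ->]].
have [k2 ->] : exists k, \prod_(M <- Ms) tr0 (monomial (@kx I) M) = bs k.
  elim: Ms => [|M Ms [k IH]]; first by exists mone; rewrite big_nil X0oneE.
  rewrite big_cons IH mon_bs tr0_basis /trH basis_mul.
  by eexists.
rewrite mon_bs basis_mul; by eexists.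
Qed.
End X0TM.

Lemma adapted_TM_eq (I : Type) (X Y : algType complex) (trX : X -> X) (x : I -> X)
  (trY : Y -> Y) (y : I -> Y) (f : X -> Y) M0 Ms :
  adapted_hom trX x trY y f ->
  f (monomial x M0 * \prod_(M <- Ms) trX (monomial x M)) =
  monomial y M0 * \prod_(M <- Ms) trY (monomial y M).
Proof.
move=> [hf fx ftr].
rewrite (uahM hf) (uah_mon hf _ fx) (uah_prod hf); congr (_ * _).
by apply: eq_bigr => M _; rewrite -ftr (uah_mon hf _ fx).
Qed.

Section Proj.
Variables (I : Type) (F : algType complex) (y : I -> F).
Definition Hp (k : KT I) : F := if k.2 == mone then monomial y k.1 else 0.
Lemma Hp_one : Hp mone = 1.
Proof. by rewrite /Hp KToneE /= eqxx fm1 /monomial big_nil. Qed.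
Lemma Hp_mul k1 k2 : Hp (mmul k1 k2) = Hp k1 * Hp k2.
Proof.
rewrite /Hp KTmulE /= cmM_eq1 fmM /monomial big_cat.
by case: (k1.2 == mone); case: (k2.2 == mone); rewrite /= ?mul0r ?mulr0.
Qed.
Lemma X0_proj : exists p : X0 I -> F, unital_alg_hom p /\ forall i, p (kx i) = y i.
Proof.
exists (ev Hp); split; first exact: ev_hom Hp_one Hp_mul.
move=> i; rewrite /kx evB /Hp /= eqxx /monomial big_cons big_nil mulr1.
by [].
Qed.
End Proj.

Lemma mcoeff_sumX (I T : Type) (r : seq T) (F : T -> X0 I) k :
  (\sum_(i <- r) F i)@_k = \sum_(i <- r) (F i)@_k.
Proof.
elim: r => [|t r IH]; first by rewrite !big_nil mcoeff0.
by rewrite !big_cons mcoeffD IH.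
Qed.

Lemma mcoeff_bs (I : Type) (k k' : KT I) : (bs k : X0 I)@_k' = (k == k')%:R.
Proof. by rewrite bsE mcoeffU1. Qed.

Section Final.
Variables (I : Type) (X : algType complex) (tr : X -> X) (x : I -> X).
Hypothesis htr : center_valued_expectation tr.
Hypothesis U : universal_property tr x.

Lemma inj_part (F : algType complex) (y : I -> F) (g : F -> X) :
  free_unital_algebra y -> unital_alg_hom g -> (forall i, g (y i) = x i) -> injective g.
Proof.
move=> hF hg gy.
have [phi [[aphi bphi] _]] := triple_unique (@tr0_cve I) (@X0_universal I) htr U.
case: (aphi) => hphi phix _.
have [h0 [[hh0 h0y] _]] := hF (X0 I) (@kx I).
have [gw [_ ugw]] := hF X x.
have eg : g = (fun u => phi (h0 u)).
  rewrite -(ugw _ (conj hg gy)); apply: ugw; split; first exact: uah_comp hh0 hphi.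
  by move=> i; rewrite h0y phix.
have [p [hp py]] := X0_proj y.
have [gid [_ ugid]] := hF F y.
have ep : (fun u => p (h0 u)) = (fun u => u).
  rewrite -(ugid _ (conj (uah_id F) (fun i => erefl))).
  symmetry; apply: ugid; split; first exact: uah_comp hh0 hp.
  by move=> i; rewrite h0y py.
move=> u v; rewrite eg => /(bij_inj bphi) /(congr1 p) e.
by have := congr1 (fun G => G u) ep; rewrite /= e (congr1 (fun G => G v) ep).
Qed.

Lemma basis_part : is_basis (trace_monomials tr x).
Proof.
have [phi [[aphi bphi] _]] := triple_unique (@tr0_cve I) (@X0_universal I) htr U.
case: (aphi) => hphi phix phitr.
have L1 : forall k, trace_monomials tr x (phi (bs k)).
  by move=> k; apply: TM_map aphi (X0_bs_TM k).
have L2 : forall z, trace_monomials tr x z -> exists k, z = phi (bs k).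
  move=> z [M0 [Ms ->]].
  have [k ek] := @X0_TM_bs I (monomial (@kx I) M0 * \prod_(M <- Ms) tr0 (monomial (@kx I) M))
     (ex_intro _ M0 (ex_intro _ Ms erefl)).
  by exists k; rewrite -ek (adapted_TM_eq _ _ aphi).
split.
- move=> s c us sS hsum.
  pose kf (v : X) : KT I :=
    match excluded_middle_informative (exists k, v = phi (bs k)) with
    | left h => proj1_sig (constructive_indefinite_description _ h)
    | right _ => mone end.
  have kfP : forall v, trace_monomials tr x v -> v = phi (bs (kf v)).
    move=> v /L2 h; rewrite /kf; case: excluded_middle_informative => // h'.
    exact: (proj2_sig (constructive_indefinite_description _ h')).
  have e0 : \sum_(v <- s) c v *: bs (kf v) = 0 :> X0 I.
    apply: (bij_inj bphi); rewrite (lin0 (uah_lin hphi)) (lin_sum (uah_lin hphi)) -{2}hsum.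
    apply: eq_big_seq => v vs; rewrite (linZ (uah_lin hphi)) -kfP //; exact: sS.
  move=> w ws.
  have := congr1 (mcoeff (kf w)) e0.
  rewrite mcoeff_sumX mcoeff0.
  rewrite (eq_big_seq (fun v => c v * (v == w)%:R)); last first.
    move=> v vs; rewrite mcoeffZ mcoeff_bs; congr (_ * _%:R).
    congr (nat_of_bool _); apply/idP/idP => /eqP e; apply/eqP; last by rewrite e.
    by rewrite (kfP _ (sS _ vs)) (kfP _ (sS _ ws)) e.
  rewrite (bigD1_seq w) //= eqxx mulr1 big1 ?addr0 // => v /negbTE ->.
  by rewrite mulr0.
- move=> z; case: bphi => ginv cK Kc.
  exists [seq ((ginv z)@_k, phi (bs k)) | k <- msupp (ginv z)]; split.
    by move=> p /mapP [k _ ->]; exact: L1.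
  rewrite big_map -{1}(Kc z) {1}(malg_decomp (ginv z)) (lin_sum (uah_lin hphi)).
  by apply: eq_bigr => k _; rewrite (linZ (uah_lin hphi)).
Qed.
End Final.

Theorem mainTheorem1 (I : Type) :
  (* existence of a triple with the universal property for I *)
  (exists (X : algType complex) (tr : X -> X) (x : I -> X),
      center_valued_expectation tr /\ universal_property tr x)
  /\
  (* uniqueness: any two such triples are related by a unique I-adapted isomorphism *)
  (forall (X1 : algType complex) (tr1 : X1 -> X1) (x1 : I -> X1)
          (X2 : algType complex) (tr2 : X2 -> X2) (x2 : I -> X2),
      center_valued_expectation tr1 -> universal_property tr1 x1 ->
      center_valued_expectation tr2 -> universal_property tr2 x2 ->
      exists! f : X1 -> X2, adapted_hom tr1 x1 tr2 x2 f /\ bijective f)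
  /\
  (* structure of any such triple (X, tr, x) *)
  (forall (X : algType complex) (tr : X -> X) (x : I -> X),
      center_valued_expectation tr -> universal_property tr x ->
      (* the unital homomorphism C<X_i : i in I> -> X, X_i |-> X_i, is injective *)
      (forall (F : algType complex) (y : I -> F) (g : F -> X),
          free_unital_algebra y -> unital_alg_hom g ->
          (forall i, g (y i) = x i) -> injective g)
      /\
      (* { M0 tr(M1) ... tr(Mn) } is a basis of X *)
      is_basis (trace_monomials tr x)).
Proof.
split.
  exists (X0 I), (@tr0 I), (@kx I); split; [exact: tr0_cve | exact: X0_universal].
split.
  by move=> X1 tr1 x1 X2 tr2 x2 h1 U1 h2 U2; exact: triple_unique.
move=> X tr x h U; split; last exact: basis_part.
by move=> F y g hF hg gy; exact: (inj_part h U hF hg gy).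
Qed.
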